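(* Consider $\partial_t x = F_2 x^{\otimes 2}+F_1x+F_0$ with pivot $s$, let $Q$ be a positive definite matrix, $O=Q^\dagger Q$, $u(t)=x(t)-s$ and $v(t)=Qu(t)$. Suppose $F_{2,s}\neq0$, $\mu_O(F_{1,s})<0$ and $\mu_O(F_{1,s})^2-4\|F_{2,s}\|_O\|F_{0,s}\|_O>0$, and define $$r_\pm^O=\frac{-\mu_O(F_{1,s})\pm\sqrt{\mu_O(F_{1,s})^2-4\|F_{2,s}\|_O\|F_{0,s}\|_O}}{2\|F_{2,s}\|_O}.$$ Then for all $t\ge0$ in the interval of existence of the solution: if $\|u(0)\|_O=\|v(0)\|\in[r_-^O,r_+^O)$, then $\|u(t)\|_O=\|v(t)\|\le\|u(0)\|_O<r_+^O$; if $\|u(0)\|_O=\|v(0)\|\in[0,r_-^O)$, then $\|u(t)\|_O=\|v(t)\|<r_-^O$.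
   Context: Setting: $x(t)\in\mathbb{R}^n$, $F_2\in\mathbb{R}^{n\times n^2}$, $F_1\in\mathbb{R}^{n\times n}$, $F_0\in\mathbb{R}^n$, Kronecker product $\otimes$; $F_{2,s}=F_2$, $F_{1,s}=F_1+F_2(s\otimes I_n+I_n\otimes s)$, $F_{0,s}=F_2s^{\otimes2}+F_1s+F_0$. Norms: $\|\cdot\|$ Euclidean/operator norm; for $O\succ0$, $\|y\|_O=\sqrt{y^\dagger Oy}$ for vectors, $\|F\|_O=\|O^{1/2}FO^{-1/2}\|$ for $n\times n$ matrices, $\|G\|_O=\|O^{1/2}G(O^{-1/2}\otimes O^{-1/2})\|$ for $n\times n^2$ matrices; $\mu(F)=\frac12\lambda_{\max}(F+F^\dagger)$, $\mu_O(F)=\mu(O^{1/2}FO^{-1/2})$. *)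

(* Defs.v *)
From HB Require Import structures.
From mathcomp Require Import all_boot all_order all_algebra.
From mathcomp Require Import all_classical all_reals all_analysis.
From mathcomp.real_closed Require Import mxtens.
Set Implicit Arguments. Unset Strict Implicit. Unset Printing Implicit Defensive.
Import Order.TTheory GRing.Theory Num.Theory.
Import numFieldNormedType.Exports.
Local Open Scope classical_set_scope.
Local Open Scope ring_scope.

Section Defs.
Variable R : realType.

Definition enorm {m : nat} (y : 'cV[R]_m) : R :=
  Num.sqrt (\sum_(i < m) y i 0 ^+ 2).

Definition opnorm {m p : nat} (A : 'M[R]_(m, p)) : R :=
  sup [set enorm (A *m y) | y in [set y : 'cV[R]_p | enorm y <= 1]].

Definition posdef {n : nat} (Q : 'M[R]_n) : Prop :=
  Q^T = Q /\ forall y : 'cV[R]_n, y != 0 -> 0 < (y^T *m Q *m y) 0 0.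

(* the positive definite square root O^{1/2} (chosen; unique when it exists) *)
Definition msqrt {n : nat} (O : 'M[R]_n) : 'M[R]_n :=
  xget 0 [set S | posdef S /\ S *m S = O].

Definition lambda_max {n : nat} (S : 'M[R]_n) : R :=
  sup [set a : R | eigenvalue S a].

Definition lognorm {n : nat} (F : 'M[R]_n) : R :=
  2^-1 * lambda_max (F + F^T).

Definition normO_vec {n : nat} (O : 'M[R]_n) (y : 'cV[R]_n) : R :=
  Num.sqrt ((y^T *m O *m y) 0 0).

Definition normO_mat {n : nat} (O : 'M[R]_n) (F : 'M[R]_n) : R :=
  opnorm (msqrt O *m F *m invmx (msqrt O)).

Definition normO_mat2 {n : nat} (O : 'M[R]_n) (G : 'M[R]_(n, n * n)) : R :=
  opnorm (msqrt O *m G *m tensmx (invmx (msqrt O)) (invmx (msqrt O))).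

Definition lognormO {n : nat} (O : 'M[R]_n) (F : 'M[R]_n) : R :=
  lognorm (msqrt O *m F *m invmx (msqrt O)).

Definition kron2 {n : nat} (x : 'cV[R]_n) : 'cV[R]_(n * n) := tensmx x x.

Definition kron_vI {n : nat} (s : 'cV[R]_n) : 'M[R]_(n * n, n) :=
  castmx (erefl, mul1n n) (tensmx s (1%:M : 'M[R]_n)).

Definition kron_Iv {n : nat} (s : 'cV[R]_n) : 'M[R]_(n * n, n) :=
  castmx (erefl, muln1 n) (tensmx (1%:M : 'M[R]_n) s).

Definition F2s {n : nat} (F2 : 'M[R]_(n, n * n)) (s : 'cV[R]_n) := F2.
Definition F1s {n : nat} (F2 : 'M[R]_(n, n * n)) (F1 : 'M[R]_n) (s : 'cV[R]_n) :=
  F1 + F2 *m (kron_vI s + kron_Iv s).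
Definition F0s {n : nat} (F2 : 'M[R]_(n, n * n)) (F1 : 'M[R]_n) (F0 : 'cV[R]_n)
  (s : 'cV[R]_n) : 'cV[R]_n :=
  F2 *m kron2 s + F1 *m s + F0.

Definition qrhs {n : nat} (F2 : 'M[R]_(n, n * n)) (F1 : 'M[R]_n) (F0 : 'cV[R]_n)
  (x : 'cV[R]_n) : 'cV[R]_n :=
  F2 *m kron2 x + F1 *m x + F0.

End Defs.

(* Main.v *)
Require Import Defs.
From HB Require Import structures.
From mathcomp Require Import all_boot all_order all_algebra.
From mathcomp Require Import all_classical all_reals all_analysis.
From mathcomp.real_closed Require Import mxtens.
From mathcomp Require Import ring lra.
Import Order.TTheory GRing.Theory Num.Theory.
Import numFieldNormedType.Exports.
Local Open Scope classical_set_scope.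
Local Open Scope ring_scope.
Set Implicit Arguments. Unset Strict Implicit. Unset Printing Implicit Defensive.

Section VecBasics.
Variable R : realType.

Definition dot {n} (y z : 'cV[R]_n) : R := \sum_(i < n) y i 0 * z i 0.
Definition nsq {n} (y : 'cV[R]_n) : R := dot y y.

Lemma dotE n (y z : 'cV[R]_n) : dot y z = (y^T *m z) 0 0.
Proof. by rewrite /dot !mxE; apply: eq_bigr => i _; rewrite mxE. Qed.

Lemma dotC n (y z : 'cV[R]_n) : dot y z = dot z y.
Proof. by apply: eq_bigr => i _; rewrite mulrC. Qed.

Lemma dotDl n (y y' z : 'cV[R]_n) : dot (y + y') z = dot y z + dot y' z.
Proof. by rewrite /dot -big_split; apply: eq_bigr => i _; rewrite mxE mulrDl. Qed.

Lemma dotDr n (y z z' : 'cV[R]_n) : dot y (z + z') = dot y z + dot y z'.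
Proof. by rewrite dotC dotDl !(dotC _ y). Qed.

Lemma dotZl n (c : R) (y z : 'cV[R]_n) : dot (c *: y) z = c * dot y z.
Proof. by rewrite /dot mulr_sumr; apply: eq_bigr => i _; rewrite mxE mulrA. Qed.

Lemma dotZr n (c : R) (y z : 'cV[R]_n) : dot y (c *: z) = c * dot y z.
Proof. by rewrite dotC dotZl dotC. Qed.

Lemma dotNl n (y z : 'cV[R]_n) : dot (- y) z = - dot y z.
Proof. by rewrite -scaleN1r dotZl mulN1r. Qed.

Lemma dotNr n (y z : 'cV[R]_n) : dot y (- z) = - dot y z.
Proof. by rewrite -scaleN1r dotZr mulN1r. Qed.

Lemma dotBl n (y y' z : 'cV[R]_n) : dot (y - y') z = dot y z - dot y' z.
Proof. by rewrite dotDl dotNl. Qed.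

Lemma dotBr n (y z z' : 'cV[R]_n) : dot y (z - z') = dot y z - dot y z'.
Proof. by rewrite dotDr dotNr. Qed.

Lemma dot0l n (z : 'cV[R]_n) : dot 0 z = 0.
Proof. by rewrite /dot big1 // => i _; rewrite mxE mul0r. Qed.

Lemma dot0r n (z : 'cV[R]_n) : dot z 0 = 0.
Proof. by rewrite dotC dot0l. Qed.

Lemma dot_mulmx n m (A : 'M[R]_(n, m)) y z : dot y (A *m z) = dot (A^T *m y) z.
Proof. by rewrite !dotE trmx_mul trmxK mulmxA. Qed.

Lemma nsq_ge0 n (y : 'cV[R]_n) : 0 <= nsq y.
Proof. by apply: sumr_ge0 => i _; rewrite -expr2 sqr_ge0. Qed.

Lemma nsq_eq0 n (y : 'cV[R]_n) : nsq y = 0 -> y = 0.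
Proof.
move=> /eqP; rewrite /nsq /dot psumr_eq0 => [/allP H|i _]; last by rewrite -expr2 sqr_ge0.
apply/matrixP => i j; rewrite (ord1 j) mxE.
by have /H := mem_index_enum i; rewrite implyTb -expr2 sqrf_eq0 => /eqP.
Qed.

Lemma nsq_gt0 n (y : 'cV[R]_n) : y != 0 -> 0 < nsq y.
Proof.
move=> y0; rewrite lt_def nsq_ge0 andbT; apply/eqP => /nsq_eq0 h.
by rewrite h eqxx in y0.
Qed.

Lemma nsqZ n c (y : 'cV[R]_n) : nsq (c *: y) = c ^+ 2 * nsq y.
Proof. by rewrite /nsq dotZl dotZr mulrA expr2. Qed.

Lemma nsqN n (y : 'cV[R]_n) : nsq (- y) = nsq y.
Proof. by rewrite /nsq dotNl dotNr opprK. Qed.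

Lemma enormE n (y : 'cV[R]_n) : enorm y = Num.sqrt (nsq y).
Proof. by rewrite /enorm /nsq /dot; congr Num.sqrt; apply: eq_bigr => i _; rewrite expr2. Qed.

Lemma enorm_ge0 n (y : 'cV[R]_n) : 0 <= enorm y.
Proof. by rewrite enormE sqrtr_ge0. Qed.

Lemma enorm_sq n (y : 'cV[R]_n) : enorm y ^+ 2 = nsq y.
Proof. by rewrite enormE sqr_sqrtr // nsq_ge0. Qed.

Lemma quad_le (A B C : R) : 0 <= C ->
  (forall l, 0 <= A - 2 * l * B + l ^+ 2 * C) -> B ^+ 2 <= A * C.
Proof.
move=> C0 H; have [Cgt0|] := ltP 0 C.
  have := H (B / C); set l := B / C => h.
  have e : l * C = B by rewrite /l divfK // gt_eqF.
  have : 0 <= A * C - B ^+ 2.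
    have -> : A * C - B ^+ 2 = (A - 2 * l * B + l ^+ 2 * C) * C.
      by rewrite -e; ring.
    by rewrite mulr_ge0 // ltW.
  by rewrite subr_ge0.
move=> Cle0; have Ce : C = 0 by apply/eqP; rewrite eq_le Cle0 C0.
rewrite Ce mulr0; have [->|Bn0] := eqVneq B 0; first by rewrite expr0n.
have := H ((A + 1) / (2 * B)); rewrite Ce mulr0 addr0.
have -> : 2 * ((A + 1) / (2 * B)) * B = A + 1.
  by field.
by rewrite opprD addrA subrr sub0r oppr_ge0 ler10.
Qed.

Lemma CS n (y z : 'cV[R]_n) : dot y z ^+ 2 <= nsq y * nsq z.
Proof.
apply: quad_le; first exact: nsq_ge0.
move=> l; have := nsq_ge0 (y - l *: z).
by rewrite /nsq !(dotBl, dotBr, dotZl, dotZr) (dotC z y); lra.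
Qed.

Definition frob {m p} (A : 'M[R]_(m, p)) : R := \sum_(i < m) \sum_(j < p) A i j ^+ 2.

Lemma frob_ge0 m p (A : 'M[R]_(m, p)) : 0 <= frob A.
Proof. by apply: sumr_ge0 => i _; apply: sumr_ge0 => j _; rewrite sqr_ge0. Qed.

Lemma nsq_mul m p (A : 'M[R]_(m, p)) y : nsq (A *m y) <= frob A * nsq y.
Proof.
rewrite /nsq {1}/dot /frob mulr_suml; apply: ler_sum => i _.
pose r : 'cV[R]_p := (row i A)^T.
have e : (A *m y) i 0 = dot r y.
  by rewrite mxE /dot; apply: eq_bigr => j _; rewrite !mxE.
have er : \sum_(j < p) A i j ^+ 2 = nsq r.
  by rewrite /nsq /dot; apply: eq_bigr => j _; rewrite !mxE expr2.
by rewrite e er -expr2 CS.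
Qed.

Lemma sq_le_bound (x F : R) : 0 <= F -> x ^+ 2 <= F -> x <= F + 1.
Proof. move=> F0 h; nra. Qed.

End VecBasics.
Section Spectral.
Variable R : realType.

Lemma ker_vec n (A : 'M[R]_n) : ~~ (A \in unitmx) ->
  exists2 v : 'rV[R]_n, v *m A = 0 & v != 0.
Proof.
move=> nu; have : eigenvalue A 0.
  rewrite /eigenvalue /eigenspace.
  have -> : A - 0%:M = A by apply/matrixP => i j; rewrite !mxE mul0rn subr0.
  by rewrite kermx_eq0 row_free_unit.
by case/eigenvalueP => v vA v0; exists v => //; rewrite vA scale0r.
Qed.

Lemma unit_vec n : nsq (delta_mx 0 0 : 'cV[R]_n.+1) = 1.
Proof. by rewrite /nsq dotE trmx_delta mul_delta_mx mxE !eqxx. Qed.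

Lemma dot_scalar n (c : R) (y : 'cV[R]_n) : dot y (c%:M *m y) = c * nsq y.
Proof. by rewrite mul_scalar_mx dotZr. Qed.

Lemma top_eig n (S : 'M[R]_n.+1) : S^T = S ->
  exists c, (forall y, dot y (S *m y) <= c * nsq y) /\ ~~ ((S - c%:M) \in unitmx).
Proof.
move=> Ssym.
pose E := [set dot y (S *m y) | y in [set y : 'cV[R]_n.+1 | nsq y = 1]].
have hE : has_sup E.
  split; first by exists (dot (delta_mx 0 0) (S *m delta_mx 0 0)); exists (delta_mx 0 0) => //; exact: unit_vec.
  exists (frob S + 1) => _ [y /= y1 <-]; apply: sq_le_bound; first exact: frob_ge0.
  apply: le_trans (CS _ _) _; rewrite y1 mul1r.
  by apply: le_trans (nsq_mul _ _) _; rewrite y1 mulr1.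
pose c := sup E.
have bnd : forall y, dot y (S *m y) <= c * nsq y.
  move=> y; have [->|y0] := eqVneq y 0.
    by rewrite dot0l /nsq dot0l mulr0.
  have np := nsq_gt0 y0.
  pose k := Num.sqrt (nsq y).
  have kp : 0 < k by rewrite sqrtr_gt0.
  have k2 : k ^+ 2 = nsq y by rewrite sqr_sqrtr // ltW.
  pose y' := k^-1 *: y.
  have y'1 : nsq y' = 1 by rewrite nsqZ exprVn k2 mulVf // gt_eqF.
  have : dot y' (S *m y') <= c by apply: sup_upper_bound => //; exists y'.
  rewrite /y' -scalemxAr dotZl dotZr mulrA -expr2 exprVn k2.
  by rewrite ler_pdivrMl // mulrC.
exists c; split => //.
apply/negP => Pu.
pose P := c%:M - S.
pose Pinv := - invmx (S - c%:M).
have PinvP : Pinv *m P = 1%:M.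
  have -> : P = - (S - c%:M) by rewrite opprB.
  by rewrite mulmxN mulNmx opprK mulVmx.
have Psym : P^T = P by rewrite /P linearB /= tr_scalar_mx Ssym.
have qE : forall a, dot a (P *m a) = c * nsq a - dot a (S *m a).
  by move=> a; rewrite /P mulmxBl dotBr dot_scalar.
have q0 : forall a, 0 <= dot a (P *m a).
  by move=> a; rewrite qE subr_ge0.
have dsym : forall a b, dot b (P *m a) = dot a (P *m b).
  by move=> a b; rewrite dot_mulmx Psym dotC.
have PCS : forall a b, dot a (P *m b) ^+ 2 <= dot a (P *m a) * dot b (P *m b).
  move=> a b; apply: quad_le; first exact: q0.
  move=> l; have := q0 (a - l *: b).
  rewrite mulmxBr -scalemxAr !(dotBl, dotBr, dotZl, dotZr) (dsym a b); lra.
pose K := frob Pinv; pose L := frob P.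
have K0 : 0 <= K by exact: frob_ge0.
have L0 : 0 <= L by exact: frob_ge0.
pose eps := (K ^+ 2 * L + 1)^-1.
have eps0 : 0 < eps by rewrite invr_gt0; nra.
have [_ [y /= y1 <-] hy] := sup_adherent eps0 hE.
pose qy := dot y (P *m y).
have qylt : qy < eps by move: hy; rewrite /qy qE y1 mulr1 /c; lra.
have qy0 : 0 <= qy := q0 y.
pose N := nsq (P *m y).
have N1 : 1 <= K * N.
  have := nsq_mul Pinv (P *m y); rewrite mulmxA PinvP mul1mx y1 //.
have N0 : 0 <= N by exact: nsq_ge0.
have NE : N = dot y (P *m (P *m y)).
  by rewrite /N /nsq dot_mulmx Psym dotC.
have h1 : N ^+ 2 <= qy * dot (P *m y) (P *m (P *m y)) by rewrite NE; exact: PCS.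
have h2 : dot (P *m y) (P *m (P *m y)) ^+ 2 <= N * (L * N).
  apply: le_trans (CS _ _) _; apply: ler_wpM2l => //; exact: nsq_mul.
set z := dot (P *m y) (P *m (P *m y)) in h1 h2.
have z0 : 0 <= z by exact: q0.
have Np : 0 < N.
  rewrite lt_def N0 andbT; apply/eqP => N0'; move: N1; rewrite N0' mulr0 ler10 //.
have h3 : N ^+ 2 <= qy ^+ 2 * L.
  have h4 : N ^+ 4 <= qy ^+ 2 * (N ^+ 2 * L).
    have -> : N ^+ 4 = (N ^+ 2) ^+ 2 by rewrite -exprM.
    apply: le_trans (_ : (qy * z) ^+ 2 <= _).
      by rewrite ler_sqr // ?nnegrE ?exprn_ge0 ?mulr_ge0.
    by rewrite exprMn; apply: ler_wpM2l; [exact: exprn_ge0 | nra].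
  have N2p : 0 < N ^+ 2 by exact: exprn_gt0.
  have : N ^+ 2 * N ^+ 2 <= N ^+ 2 * (qy ^+ 2 * L).
    by rewrite -exprD /= mulrCA; exact: h4.
  by rewrite ler_pM2l.
have eps1 : eps <= 1.
  have kp : 0 < K ^+ 2 * L + 1 by nra.
  rewrite /eps invf_le1 //; nra.
have : 1 <= K ^+ 2 * L * qy ^+ 2 by nra.
have : K ^+ 2 * L * eps < 1.
  rewrite /eps ltr_pdivrMr; last nra.
  lra.
nra.
Qed.

End Spectral.
Section Sqrt.
Variable R : realType.

Lemma posdefE n (Q : 'M[R]_n) y : (y^T *m Q *m y) 0 0 = dot y (Q *m y).
Proof. by rewrite dotE mulmxA. Qed.

Lemma eigvec n (S : 'M[R]_n) c : S^T = S -> ~~ ((S - c%:M) \in unitmx) ->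
  exists2 w : 'cV[R]_n, w != 0 & S *m w = c *: w.
Proof.
move=> Ssym /ker_vec [v vS v0]; exists v^T.
  by apply: contra v0 => /eqP h; rewrite -[v]trmxK h linear0.
move: vS; rewrite mulmxBr mul_mx_scalar => /eqP; rewrite subr_eq0 => /eqP e.
by rewrite -{1}Ssym -trmx_mul e linearZ.
Qed.

Lemma sym_neg n (S Q D : 'M[R]_n.+1) : posdef S -> posdef Q -> D^T = D ->
  S *m D + D *m Q = 0 -> forall y, dot y (D *m y) <= 0.
Proof.
move=> [_ hS] [_ hQ] Dsym e y.
have [c [bnd nu]] := top_eig Dsym.
have [w w0 Dw] := eigvec Dsym nu.
have : dot w ((S *m D + D *m Q) *m w) = 0 by rewrite e mul0mx dot0r.
rewrite mulmxDl -!mulmxA Dw -scalemxAr dotDr dotZr dot_mulmx Dsym Dw dotZl.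
have := hS w w0; have := hQ w w0; rewrite !posdefE => h1 h2 h.
have c0 : c = 0.
  have : c * (dot w (S *m w) + dot w (Q *m w)) = 0 by rewrite mulrDr.
  by move/eqP; rewrite mulf_eq0 => /orP [/eqP //|]; rewrite gt_eqF // addr_gt0.
by apply: le_trans (bnd y) _; rewrite c0 mul0r.
Qed.

Lemma sym_form0 n (D : 'M[R]_n) : D^T = D -> (forall y, dot y (D *m y) = 0) -> D = 0.
Proof.
move=> Dsym h.
have hab : forall a b, dot a (D *m b) = 0.
  move=> a b; have := h (a + b).
  rewrite mulmxDr !(dotDl, dotDr) h h add0r addr0.
  have -> : dot b (D *m a) = dot a (D *m b) by rewrite dot_mulmx Dsym dotC.
  by move/eqP; rewrite -mulr2n mulrn_eq0 /= => /eqP.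
apply/matrixP => i j; rewrite mxE.
have := hab (delta_mx i 0) (delta_mx j 0).
by rewrite dotE trmx_delta -rowE -colE !mxE.
Qed.

Lemma msqrt_Q n (Q : 'M[R]_n.+1) : posdef Q -> msqrt (Q^T *m Q) = Q.
Proof.
move=> hQ; have Qsym := hQ.1.
have ex : exists S, posdef S /\ S *m S = Q^T *m Q by exists Q; rewrite Qsym.
have [hS eS] := xgetPex 0 ex.
rewrite /msqrt; set S := xget _ _ in hS eS *.
have Dsym : (S - Q)^T = S - Q by rewrite linearB /= hS.1 Qsym.
have e1 : S *m (S - Q) + (S - Q) *m Q = 0.
  by rewrite mulmxBr mulmxBl eS Qsym addrA subrK subrr.
have e2 : S *m (- (S - Q)) + (- (S - Q)) *m Q = 0.
  by rewrite mulmxN mulNmx -opprD e1 oppr0.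
have Dsym' : (- (S - Q))^T = - (S - Q) by rewrite linearN /= Dsym.
have h1 := sym_neg hS hQ Dsym e1.
have h2 := sym_neg hS hQ Dsym' e2.
have : S - Q = 0.
  apply: (@sym_form0 n.+1 (S - Q) Dsym) => y; apply/eqP; rewrite eq_le h1 /=.
  by have := h2 y; rewrite mulNmx dotNr oppr_le0.
by move/eqP; rewrite subr_eq0 => /eqP.
Qed.

Lemma lognorm_bound n (M : 'M[R]_n.+1) y : dot y (M *m y) <= lognorm M * nsq y.
Proof.
pose S := M + M^T.
have Ssym : S^T = S by rewrite /S linearD /= trmxK addrC.
have [c [bnd nu]] := top_eig Ssym.
have ce : eigenvalue S c by rewrite /eigenvalue /eigenspace kermx_eq0 row_free_unit.
have ub : ubound [set a : R | eigenvalue S a] c.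
  move=> a /eigenvalueP [v vS v0].
  have w0 : v^T != 0 by apply: contra v0 => /eqP h; rewrite -[v]trmxK h linear0.
  have Sw : S *m v^T = a *: v^T by rewrite -{1}Ssym -trmx_mul vS linearZ.
  have := bnd v^T; rewrite Sw dotZr.
  by rewrite ler_pM2r // nsq_gt0.
have lm : lambda_max S = c.
  apply/eqP; rewrite eq_le; apply/andP; split.
    by apply: ge_sup => //; exists c.
  by apply: sup_upper_bound => //; split; [exists c | exists c].
have : dot y (S *m y) = 2 * dot y (M *m y).
  have e' : dot y (M^T *m y) = dot y (M *m y) by rewrite dot_mulmx trmxK dotC.
  by rewrite /S mulmxDl dotDr e' mulr2n mulrDl mul1r.
rewrite /lognorm -/S lm => e.
have := bnd y; rewrite e; lra.
Qed.

Lemma opnorm_prop m p (A : 'M[R]_(m, p)) :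
  0 <= opnorm A /\ forall y, enorm (A *m y) <= opnorm A * enorm y.
Proof.
pose E := [set enorm (A *m y) | y in [set y : 'cV[R]_p | enorm y <= 1]].
have hE : has_sup E.
  split; first by exists (enorm (A *m 0)); exists 0 => //=; rewrite enormE /nsq dot0l sqrtr0 ler01.
  exists (frob A + 1) => _ [y /= y1 <-]; apply: sq_le_bound; first exact: frob_ge0.
  rewrite enorm_sq; apply: le_trans (nsq_mul _ _) _.
  rewrite -[leRHS]mulr1; apply: ler_wpM2l; first exact: frob_ge0.
  rewrite -enorm_sq; have := enorm_ge0 y; nra.
have ub : forall y, enorm y <= 1 -> enorm (A *m y) <= opnorm A.
  by move=> y y1; apply: sup_upper_bound => //; exists y.
split.
  by apply: le_trans (ub 0 _); rewrite ?enorm_ge0 // enormE /nsq dot0l sqrtr0.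
move=> y; have [->|y0] := eqVneq y 0.
  by rewrite mulmx0 !enormE /nsq !dot0l sqrtr0 mulr0.
have kp : 0 < enorm y by rewrite enormE sqrtr_gt0 nsq_gt0.
have enZ : forall c (z : 'cV[R]_p), 0 <= c -> enorm (c *: z) = c * enorm z.
  by move=> c z c0; rewrite !enormE nsqZ sqrtrM ?exprn_ge0 // sqrtr_sqr ger0_norm.
have enZA : forall c (z : 'cV[R]_p), 0 <= c -> enorm (A *m (c *: z)) = c * enorm (A *m z).
  move=> c z c0; rewrite -scalemxAr !enormE nsqZ sqrtrM ?exprn_ge0 // sqrtr_sqr ger0_norm //.
have ki : 0 <= (enorm y)^-1 by rewrite invr_ge0 ltW.
have h1 : enorm ((enorm y)^-1 *: y) <= 1 by rewrite enZ // mulVf ?gt_eqF.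
have := ub _ h1; rewrite enZA // => h.
by rewrite mulrC -ler_pdivrMl // mulrC.
Qed.

End Sqrt.
Section Tens.
Variable R : realType.

Lemma unidx1_1 n (k : 'I_(1 * n)) : (mxtens_unindex k).1 = ord0.
Proof. exact: ord1. Qed.

Lemma unidx2_1 n (k : 'I_(n * 1)) : (mxtens_unindex k).2 = ord0.
Proof. exact: ord1. Qed.

Lemma nsq_kron2 n (v : 'cV[R]_n) : nsq (kron2 v) = nsq v ^+ 2.
Proof.
rewrite expr2 /nsq /dot mxtens.mulr_sum; apply: eq_bigr => k _.
rewrite /kron2 !mxE !unidx1_1.
have -> : (mxtens_unindex (0 : 'I_(1 * 1))).2 = ord0 by exact: ord1.
ring.
Qed.

Lemma kron2D n (u s : 'cV[R]_n) :
  kron2 (u + s) = kron2 u + tensmx u s + tensmx s u + kron2 s.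
Proof. by apply/matrixP => i j; rewrite !mxE; ring. Qed.

Lemma kron_vIE n (s u : 'cV[R]_n) : kron_vI s *m u = tensmx s u.
Proof.
apply/matrixP => i j; rewrite (ord1 j) [LHS]mxE [RHS]mxE.
rewrite unidx1_1.
have -> : (mxtens_unindex (0 : 'I_(1 * 1))).2 = ord0 by exact: ord1.
transitivity (s (mxtens_unindex i).1 0 * (1%:M *m u) (mxtens_unindex i).2 0); last by rewrite mul1mx.
rewrite [(1%:M *m u) _ _]mxE mulr_sumr; apply: eq_bigr => k _.
rewrite castmxE cast_ord_id mxE unidx1_1 mulrA.
rewrite (_ : (mxtens_unindex (cast_ord (esym (mul1n n)) k)).2 = k) //.
by apply: val_inj => /=; rewrite modn_small.
Qed.

Lemma kron_IvE n (s u : 'cV[R]_n) : kron_Iv s *m u = tensmx u s.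
Proof.
apply/matrixP => i j; rewrite (ord1 j) [LHS]mxE [RHS]mxE.
rewrite unidx1_1.
have -> : (mxtens_unindex (0 : 'I_(1 * 1))).2 = ord0 by exact: ord1.
transitivity ((1%:M *m u) (mxtens_unindex i).1 0 * s (mxtens_unindex i).2 0); last by rewrite mul1mx.
rewrite [(1%:M *m u) _ _]mxE mulr_suml; apply: eq_bigr => k _.
rewrite castmxE cast_ord_id mxE unidx2_1.
rewrite (_ : (mxtens_unindex (cast_ord (esym (muln1 n)) k)).1 = k); first ring.
by apply: val_inj => /=; rewrite divn1.
Qed.

Lemma qrhsE n (F2 : 'M[R]_(n, n * n)) F1 F0 s x :
  qrhs F2 F1 F0 x = F2s F2 s *m kron2 (x - s) + F1s F2 F1 s *m (x - s) + F0s F2 F1 F0 s.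
Proof.
rewrite /qrhs /F2s /F1s /F0s.
have {1 2}-> : x = (x - s) + s by rewrite subrK.
set u := x - s.
rewrite kron2D !mulmxDl -mulmxA mulmxDl kron_vIE kron_IvE !mulmxDr.
by apply/matrixP => i j; rewrite !mxE; ring.
Qed.

End Tens.
Section Key.
Variable R : realType.

Lemma kron2_mul n (A : 'M[R]_n) (v : 'cV[R]_n) : tensmx A A *m kron2 v = kron2 (A *m v).
Proof. exact: (tensmx_mul A A v v). Qed.

Lemma dot_le n (a b : 'cV[R]_n) : dot a b <= enorm a * enorm b.
Proof.
have h := CS a b; rewrite -!enorm_sq -exprMn in h.
have := enorm_ge0 a; have := enorm_ge0 b.
move=> ha hb; have hab : 0 <= enorm a * enorm b by exact: mulr_ge0.
apply: le_trans (ler_norm _) _.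
by rewrite -(ler_pXn2r (n:=2)) ?nnegrE ?normr_ge0 // real_normK ?num_real.
Qed.

Lemma normO_vecE n (Q : 'M[R]_n) y : normO_vec (Q^T *m Q) y = enorm (Q *m y).
Proof.
by rewrite /normO_vec enormE /nsq dotE trmx_mul !mulmxA.
Qed.

Lemma enorm_kron2 n (v : 'cV[R]_n) : enorm (kron2 v) = enorm v ^+ 2.
Proof. by rewrite enorm_sq enormE nsq_kron2 sqrtr_sqr ger0_norm // nsq_ge0. Qed.

Lemma key_ineq n (Q : 'M[R]_n.+1) (F2 : 'M[R]_(n.+1, n.+1 * n.+1)) F1 F0 s X :
  posdef Q ->
  dot (Q *m (X - s)) (Q *m qrhs F2 F1 F0 X) <=
    normO_mat2 (Q^T *m Q) (F2s F2 s) * enorm (Q *m (X - s)) ^+ 3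
  + lognormO (Q^T *m Q) (F1s F2 F1 s) * enorm (Q *m (X - s)) ^+ 2
  + normO_vec (Q^T *m Q) (F0s F2 F1 F0 s) * enorm (Q *m (X - s)).
Proof.
move=> hQ.
have Qu : Q \in unitmx.
  apply/negP => /negP /ker_vec [w wQ w0].
  have w0' : w^T != 0 by apply: contra w0 => /eqP h; rewrite -[w]trmxK h linear0.
  have := hQ.2 _ w0'; rewrite posdefE.
  have -> : Q *m w^T = 0 by rewrite -{1}hQ.1 -trmx_mul wQ linear0.
  by rewrite dot0r ltxx.
rewrite /normO_mat2 /lognormO msqrt_Q // normO_vecE.
set Qi := invmx Q.
set u := X - s; set v := Q *m u.
have uE : u = Qi *m v by rewrite /v mulmxA mulVmx // mul1mx.
rewrite (qrhsE _ _ _ s) -/u.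
set t1 := F2s F2 s *m kron2 u; set t2 := F1s F2 F1 s *m u; set t3 := F0s F2 F1 F0 s.
rewrite [Q *m (_ + _ + t3)]mulmxDr [Q *m (t1 + t2)]mulmxDr.
rewrite [dot v (_ + Q *m t3)]dotDr [dot v (Q *m t1 + _)]dotDr.
apply: lerD; first apply: lerD.
- set M2 := Q *m F2s F2 s *m tensmx Qi Qi.
  have -> : Q *m t1 = M2 *m kron2 v.
    by rewrite /M2 /t1 -!mulmxA kron2_mul -uE.
  apply: le_trans (dot_le _ _) _.
  have [h0 h] := opnorm_prop M2.
  have -> : opnorm M2 * enorm v ^+ 3 = enorm v * (opnorm M2 * enorm v ^+ 2) by ring.
  apply: ler_wpM2l; first exact: enorm_ge0.
  by apply: le_trans (h _) _; rewrite enorm_kron2.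
- have -> : Q *m (F1s F2 F1 s *m u) = (Q *m F1s F2 F1 s *m Qi) *m v.
    by rewrite -!mulmxA -uE.
  by apply: le_trans (lognorm_bound _ _) _; rewrite enorm_sq.
- by rewrite mulrC; exact: dot_le.
Qed.

End Key.
Section Analysis.
Variable R : realType.

Lemma within_eps (f : R -> R) (A : set R) x : {within A, continuous f} -> A x ->
  forall e, 0 < e -> exists2 d, 0 < d & forall y, A y -> `|x - y| < d -> `|f x - f y| < e.
Proof.
move=> /subspace_continuousP /(_ x) hc Ax e e0.
have := (cvgrPdist_lt _ _).1 (hc Ax) e e0.
move=> h; have {}h := h (within_filter _ (nbhs_pfilter x)).
have [d d0 hd] := (nbhs_ballP _ _).1 h.
exists d => // y Ay xy; apply: (hd y) => //.
Qed.

Lemma barrier (f df : R -> R) (t c d : R) : 0 <= t -> c < d ->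
  {within `[0, t], continuous f} ->
  (forall x, 0 < x < t -> is_derive x 1 f (df x)) ->
  (forall x, 0 < x < t -> c < f x < d -> df x <= 0) ->
  f 0 <= c -> f t <= c.
Proof.
move=> t0 cd fc fd fneg f0.
rewrite leNgt; apply/negP => ft.
pose S := [set x | (0 <= x <= t) /\ f x <= c].
have hS : has_sup S.
  split; first by exists 0; split => //; rewrite lexx.
  by exists t => x [/andP [_ ->]].
pose s := sup S.
have s0 : 0 <= s by apply: sup_upper_bound => //; split => //; rewrite lexx.
have st : s <= t by apply: ge_sup; [exists 0; split => //; rewrite lexx | move=> x [/andP [_ ->]]].
have sA : [set` `[0, t]] s by rewrite /= in_itv /= s0 st.
have fs : f s <= c.
  rewrite leNgt; apply/negP => fsc.
  have e0 : 0 < f s - c by rewrite subr_gt0.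
  have [del del0 hdel] := within_eps fc sA e0.
  have [y [/andP [y0 yt] fy] hy] := sup_adherent del0 hS.
  have ys : y <= s by apply: sup_upper_bound => //; split => //; rewrite y0 yt.
  have := hdel y; rewrite /= in_itv /= y0 yt => /(_ isT).
  have hys : `|s - y| < del by rewrite ger0_norm ?subr_ge0 //; move: hy; rewrite -/s; lra.
  move=> /(_ hys); rewrite ltr_norml => /andP [_]; lra.
have slt : s < t by rewrite lt_def st andbT; apply/eqP => e; move: ft; rewrite e; lra.
have e1 : 0 < d - c by rewrite subr_gt0.
have [del del0 hdel] := within_eps fc sA e1.
pose b := Num.min t (s + del / 2).
have bt : b <= t by rewrite /b ge_min lexx.
have sb : s < b by rewrite /b lt_min slt /=; lra.
have bsd : b <= s + del / 2 by rewrite /b ge_min lexx orbT.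
have inI : forall x, s <= x <= b -> [set` `[0, t]] x.
  by move=> x /andP [h1 h2]; rewrite /= in_itv /=; apply/andP; split; lra.
have fltd : forall x, s <= x <= b -> f x < d.
  move=> x hx; have := hdel x (inI x hx).
  have [h1 h2] := andP hx.
  have hxs : `|s - x| < del by rewrite distrC ger0_norm ?subr_ge0 //; lra.
  move=> /(_ hxs); rewrite ltr_norml => /andP [h3 _]; lra.
have fgtc : forall x, s < x <= b -> c < f x.
  move=> x /andP [h1 h2]; rewrite ltNge; apply/negP => fx.
  have : x <= s by apply: sup_upper_bound => //; split => //; apply/andP; split; lra.
  lra.
have inO : forall x, x \in `]s, b[ -> 0 < x < t.
  by move=> x; rewrite in_itv /= => /andP [h1 h2]; apply/andP; split; lra.
have hd : forall x, x \in `]s, b[ -> derivable f x 1.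
  by move=> x /inO /fd [].
have hdl : forall x, x \in `]s, b[ -> derive1 f x <= 0.
  move=> x hx; have hx' := inO x hx.
  have hdx := fd x hx'; rewrite derive1E derive_val; apply: fneg => //.
  move: hx; rewrite in_itv /= => /andP [h1 h2].
  by apply/andP; split; [apply: fgtc | apply: fltd]; apply/andP; split; lra.
have hc : {within `[s, b], continuous f}.
  apply: continuous_subspaceW fc => x /=; rewrite !in_itv /= => /andP [h1 h2].
  by apply/andP; split; lra.
have := ler0_derive1_le_cc hd hdl hc.
move=> /(_ b s); rewrite !in_itv /= !lexx (ltW sb) => /(_ isT isT isT).
have := fgtc b; rewrite sb lexx => /(_ isT); lra.
Qed.

End Analysis.
Section Calc.
Variable R : realType.

Lemma cont_sum (T : topologicalType) m (F : 'I_m -> T -> R) :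
  (forall i, continuous (F i)) -> continuous (fun y => \sum_(i < m) F i y).
Proof.
elim: m F => [|m IH] F hF.
  have -> : (fun y => \sum_(i < 0) F i y) = cst 0.
    by apply/funext => y; rewrite big_ord0.
  exact: cst_continuous.
have -> : (fun y => \sum_(i < m.+1) F i y) =
   (fun y => \sum_(i < m) F (widen_ord (leqnSn m) i) y) + F ord_max.
  by apply/funext => y; rewrite big_ord_recr.
move=> y.
have h1 := IH (fun i => F (widen_ord (leqnSn m) i)) (fun i => hF _) y.
exact: (@continuousD R R^o T _ _ y h1 (hF ord_max y)).
Qed.

Lemma cont_entry (T : topologicalType) p q (g : T -> 'M[R]_(p, q)) i j :
  continuous g -> continuous (fun y => g y i j).
Proof.
move=> hg y.
exact: (@continuous_comp T _ _ g (fun M : 'M[R]_(p, q) => M i j) y (hg y) (@coord_continuous R p q i j (g y))).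
Qed.

Lemma nsq_expand n (Q : 'M[R]_n) (y s : 'cV[R]_n) : nsq (Q *m (y - s)) =
  \sum_(i < n) ((\sum_(k < n) Q i k * (y k 0 - s k 0)) * (\sum_(k < n) Q i k * (y k 0 - s k 0))).
Proof.
rewrite /nsq /dot; apply: eq_bigr => i _; rewrite mxE.
by congr (_ * _); apply: eq_bigr => k _; rewrite !mxE.
Qed.

Lemma cont_f (T : topologicalType) n (Q : 'M[R]_n) (g : T -> 'cV[R]_n) s :
  continuous g -> continuous (fun y => nsq (Q *m (g y - s))).
Proof.
move=> hg.
have -> : (fun y => nsq (Q *m (g y - s))) = (fun y => \sum_(i < n)
   ((\sum_(k < n) Q i k * (g y k 0 - s k 0)) * (\sum_(k < n) Q i k * (g y k 0 - s k 0)))).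
  by apply/funext => y; rewrite nsq_expand.
apply: cont_sum => i.
have hk : continuous (fun y => \sum_(k < n) Q i k * (g y k 0 - s k 0)).
  apply: cont_sum => k y.
  apply: (@continuousM R T (cst (Q i k)) (fun y => g y k 0 - s k 0)).
    exact: cst_continuous.
  apply: (@continuousB R R^o T (fun y => g y k 0) (cst (s k 0))).
    exact: cont_entry.
  exact: cst_continuous.
by move=> y; exact: (@continuousM R T _ _ y (hk y) (hk y)).
Qed.

Lemma deriv_entry p q (x : R -> 'M[R]_(p, q)) (t : R) (X : 'M[R]_(p, q)) (i : 'I_p) (j : 'I_q) :
  is_derive t 1 x X -> is_derive t 1 (fun y => x y i j) (X i j).
Proof.
move=> hd; have dx : derivable x t 1 by case: hd.
have dij := (derivable_mxP x t 1).1 dx i j.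
have e := derive_mx dx; rewrite derive_val in e.
rewrite e mxE; exact: derivableP.
Qed.

Lemma deriv_sum m (F : 'I_m -> R -> R) (dF : 'I_m -> R) (t : R) :
  (forall i, is_derive t 1 (F i) (dF i)) ->
  is_derive t 1 (fun y => \sum_(i < m) F i y) (\sum_(i < m) dF i).
Proof.
move=> h; have := is_derive_sum h.
by rewrite fct_sumE.
Qed.

Lemma deriv_f n (Q : 'M[R]_n) (x : R -> 'cV[R]_n) (s : 'cV[R]_n) (t : R) (X : 'cV[R]_n) :
  is_derive t 1 x X ->
  is_derive t 1 (fun y => nsq (Q *m (x y - s))) (2 * dot (Q *m (x t - s)) (Q *m X)).
Proof.
move=> hd.
have -> : (fun y => nsq (Q *m (x y - s))) = (fun y => \sum_(i < n)
   ((\sum_(k < n) Q i k * (x y k 0 - s k 0)) * (\sum_(k < n) Q i k * (x y k 0 - s k 0)))).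
  by apply/funext => y; rewrite nsq_expand.
have -> : 2 * dot (Q *m (x t - s)) (Q *m X) = \sum_(i < n)
   ((\sum_(k < n) Q i k * (x t k 0 - s k 0)) *: (\sum_(k < n) Q i k * X k 0) +
    (\sum_(k < n) Q i k * (x t k 0 - s k 0)) *: (\sum_(k < n) Q i k * X k 0)).
  rewrite /dot mulr_sumr; apply: eq_bigr => i _.
  rewrite !mxE -mulr2n mulr_natl; congr (_ *+ 2); congr (_ * _).
  by apply: eq_bigr => k _; rewrite !mxE.
apply: deriv_sum => i.
pose g := fun y => \sum_(k < n) Q i k * (x y k 0 - s k 0).
have hg : is_derive t 1 g (\sum_(k < n) Q i k * X k 0).
  apply: deriv_sum => k.
  have h1 : is_derive t 1 (fun y => x y k 0 - s k 0) (X k 0).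
    have := is_deriveB (deriv_entry k 0 hd) (is_derive_cst (s k 0) t 1).
    by rewrite subr0.
  have := is_deriveZ (Q i k) h1.
  by [].
exact: (is_deriveM hg hg).
Qed.

End Calc.
Lemma exp_lin_cont (R : realType) (K : R) : continuous (fun y : R => expR (K * y)).
Proof.
move=> y.
exact: (@continuous_comp R R R ( *%R K) expR y (@mulrl_continuous R K y) (@continuous_expR R (K * y))).
Qed.

Lemma exp_lin_deriv (R : realType) (K y : R) :
  is_derive y 1 (fun y : R => expR (K * y)) (expR (K * y) * K).
Proof.
have h1 : is_derive y 1 ( *%R K) K.
  have := is_deriveZ K (is_derive_id y (1 : R)).
  by rewrite /GRing.scale /= mulr1.
exact: (@is_derive1_comp R expR ( *%R K) y _ _ (is_derive_expR (K * y)) h1).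
Qed.

Theorem lemma5 (R : realType) (n : nat)
  (F2 : 'M[R]_(n, n * n)) (F1 : 'M[R]_n) (F0 : 'cV[R]_n) (s : 'cV[R]_n)
  (Q : 'M[R]_n) (T : \bar R) (x : R -> 'cV[R]_n) :
  posdef Q ->
  (0 < T)%E ->
  {within [set t : R | 0 <= t /\ (t%:E < T)%E], continuous x} ->
  (forall t : R, 0 < t -> (t%:E < T)%E -> is_derive t 1 x (qrhs F2 F1 F0 (x t))) ->
  let O := Q^T *m Q in
  let u := fun t => x t - s in
  let v := fun t => Q *m u t in
  let a2 := normO_mat2 O (F2s F2 s) in
  let m1 := lognormO O (F1s F2 F1 s) in
  let a0 := normO_vec O (F0s F2 F1 F0 s) in
  F2s F2 s != 0 ->
  m1 < 0 ->
  0 < m1 ^+ 2 - 4 * a2 * a0 ->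
  let rp := (- m1 + Num.sqrt (m1 ^+ 2 - 4 * a2 * a0)) / (2 * a2) in
  let rm := (- m1 - Num.sqrt (m1 ^+ 2 - 4 * a2 * a0)) / (2 * a2) in
  forall t : R, 0 <= t -> (t%:E < T)%E ->
    normO_vec O (u 0) = enorm (v 0) /\ normO_vec O (u t) = enorm (v t) /\
    (rm <= normO_vec O (u 0) < rp ->
       normO_vec O (u t) <= normO_vec O (u 0) /\ normO_vec O (u 0) < rp) /\
    (0 <= normO_vec O (u 0) < rm -> normO_vec O (u t) < rm).
Proof.
case: n F2 F1 F0 s Q x => [|n] F2 F1 F0 s Q x.
  move=> _ _ _ _ O u v a2 m1 a0 hF2.
  by move: hF2; rewrite /F2s (flatmx0 F2) eqxx.
move=> hQ T0 xc xd O u v a2 m1 a0 hF2 hm1 hD rp rm t t0 tT.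
have r_eq : forall y, normO_vec O (u y) = enorm (v y) by move=> y; rewrite /O normO_vecE.
split; first exact: r_eq. split; first exact: r_eq.
rewrite !r_eq.
pose f := fun y => nsq (Q *m (x y - s)).
have fE : forall y, f y = enorm (v y) ^+ 2 by move=> y; rewrite enorm_sq.
have r_ge0 : forall y, 0 <= enorm (v y) by move=> y; exact: enorm_ge0.
have a2ge0 : 0 <= a2 := (opnorm_prop _).1.
have a0ge0 : 0 <= a0 := sqrtr_ge0 _.
have [a2z|a2p] : a2 = 0 \/ 0 < a2.
  by move: a2ge0; rewrite le_eqVlt => /orP [/eqP <-|->]; [left|right].
  have rp0 : rp = 0 by rewrite /rp a2z !mulr0 invr0 mulr0.
  have rm0 : rm = 0 by rewrite /rm a2z !mulr0 invr0 mulr0.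
  rewrite rp0 rm0; have := r_ge0 0; split => /andP [h1 h2]; lra.
pose sD := Num.sqrt (m1 ^+ 2 - 4 * a2 * a0).
have sD2 : sD ^+ 2 = m1 ^+ 2 - 4 * a2 * a0 by rewrite sqr_sqrtr // ltW.
have sD0 : 0 <= sD := sqrtr_ge0 _.
have sDle : sD <= - m1 by nra.
have rmE : rm = (- m1 - sD) / (2 * a2) by [].
have rpE : rp = (- m1 + sD) / (2 * a2) by [].
have rm0 : 0 <= rm by rewrite rmE divr_ge0 //; lra.
have rmrp : rm <= rp by rewrite rmE rpE ler_pM2r ?invr_gt0; lra.
have fac : forall r, a2 * r ^+ 2 + m1 * r + a0 = a2 * (r - rm) * (r - rp).
  move=> r; transitivity (((2 * a2 * r + m1) ^+ 2 - sD ^+ 2) / (4 * a2)).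
    by rewrite sD2; field; rewrite gt_eqF.
  by rewrite rmE rpE; field; rewrite gt_eqF.
have tsub : forall y, 0 <= y <= t -> 0 <= y /\ (y%:E < T)%E.
  move=> y /andP [h1 h2]; split => //; apply: le_lt_trans tT; by rewrite lee_fin.
have xc' : {within `[0, t], continuous x}.
  apply: continuous_subspaceW xc => y /=; rewrite in_itv /= => hy; exact: tsub.
have fc : {within `[0, t], continuous f}.
  exact: (@cont_f R (subspace [set` `[0, t]]) _ Q x s xc').
pose df := fun y => 2 * dot (Q *m (x y - s)) (Q *m qrhs F2 F1 F0 (x y)).
have fd : forall y, 0 < y < t -> is_derive y 1 f (df y).
  move=> y /andP [h1 h2]; apply: deriv_f; apply: xd => //.
  by apply: lt_trans tT; rewrite lte_fin.
have dfb : forall y, df y <= 2 * (enorm (v y) * (a2 * (enorm (v y) - rm) * (enorm (v y) - rp))).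
  move=> y; rewrite /df -fac.
  have := key_ineq F2 F1 F0 s (x y) hQ; rewrite -/O -/a2 -/m1 -/a0.
  set r := enorm _; move=> h; nra.
split.
  move=> /andP [h1 h2]; split => //.
  set r0 := enorm (v 0) in h1 h2 *.
  have r00 : 0 <= r0 := r_ge0 0.
  have cd : r0 ^+ 2 < rp ^+ 2 by nra.
  have fneg : forall y, 0 < y < t -> r0 ^+ 2 < f y < rp ^+ 2 -> df y <= 0.
    move=> y hy; rewrite fE => /andP [l1 l2].
    have := dfb y; have := r_ge0 y; set r := enorm (v y) in l1 l2 *.
    move=> rge0 hb.
    have rr0 : r0 < r by nra.
    have rrp : r < rp by nra.
    have hp : (r - rm) * (r - rp) <= 0 by nra.
    have hp2 : r * (a2 * (r - rm) * (r - rp)) <= 0.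
      rewrite -mulrA; apply: mulr_ge0_le0 => //; apply: mulr_ge0_le0 => //; exact: ltW.
    lra.
  have f0 : f 0 <= r0 ^+ 2 by rewrite fE.
  have := barrier t0 cd fc fd fneg f0; rewrite fE => hft.
  have := r_ge0 t; nra.
move=> /andP [h1 h2].
set r0 := enorm (v 0) in h1 h2 *.
pose K := 2 * a2 * rp.
pose E := fun y : R => expR (K * y).
pose G := fun y => f y - rm ^+ 2.
pose h := E * G.
pose dh := fun y => expR (K * y) * df y + (f y - rm ^+ 2) * (expR (K * y) * K).
have hd : forall y, 0 < y < t -> is_derive y 1 h (dh y).
  move=> y hy.
  have hG : is_derive y 1 G (df y).
    have := is_deriveB (fd y hy) (is_derive_cst (rm ^+ 2) y 1).
    by rewrite subr0.
  exact: (is_deriveM (exp_lin_deriv K y) hG).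
have hc : {within `[0, t], continuous h}.
  have hE : {within `[0, t], continuous E} by apply: continuous_subspaceT; exact: exp_lin_cont.
  have hG : {within `[0, t], continuous G}.
    move=> y; apply: (@continuousB R R^o (subspace [set` `[0, t]]) f (cst (rm ^+ 2))).
      exact: fc.
    exact: cst_continuous.
  move=> y; exact: (@continuousM R (subspace [set` `[0, t]]) E G y (hE y) (hG y)).
have hE : forall y, h y = expR (K * y) * (f y - rm ^+ 2) by [].
have h0 : h 0 = r0 ^+ 2 - rm ^+ 2 by rewrite hE mulr0 expR0 mul1r fE.
have cd : h 0 < 0 by rewrite h0; have := r_ge0 0; nra.
have fneg : forall y, 0 < y < t -> h 0 < h y < 0 -> dh y <= 0.
  move=> y hy /andP [_ l2].
  have ep := expR_gt0 (K * y).
  have Gy : f y - rm ^+ 2 < 0.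
    by move: l2; rewrite hE pmulr_rlt0.
  have := dfb y; have := r_ge0 y; rewrite fE in Gy.
  set r := enorm (v y) in Gy *; move=> rge0 hb.
  have rrm : r < rm by nra.
  have rp0 : 0 <= rp by lra.
  have w0 : 0 <= (rm - r) * (r ^+ 2 + rp * rm).
    apply: mulr_ge0; first lra.
    by apply: addr_ge0; [exact: sqr_ge0 | exact: mulr_ge0].
  have key : df y + K * (r ^+ 2 - rm ^+ 2) <= 0.
    have e : 2 * (r * (a2 * (r - rm) * (r - rp))) + K * (r ^+ 2 - rm ^+ 2)
            = - (2 * a2) * ((rm - r) * (r ^+ 2 + rp * rm)) by rewrite /K; ring.
    have : 0 <= (2 * a2) * ((rm - r) * (r ^+ 2 + rp * rm)) by apply: mulr_ge0 => //; lra.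
    lra.
  have -> : dh y = expR (K * y) * (df y + K * (r ^+ 2 - rm ^+ 2)).
    by rewrite /dh fE -/r; ring.
  by apply: mulr_ge0_le0 => //; exact: ltW.
have := barrier t0 cd hc hd fneg (lexx _).
rewrite h0 hE fE => hb.
have ep := expR_gt0 (K * t).
have : enorm (v t) ^+ 2 - rm ^+ 2 < 0.
  have : expR (K * t) * (enorm (v t) ^+ 2 - rm ^+ 2) < 0 by have := r_ge0 0; nra.
  by rewrite pmulr_rlt0.
have := r_ge0 t; nra.
Qed.
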